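(* Let $A$ be a binary $n\times m$ matrix. Then $A$ has at most one binary base that is disjoint in rows.
   Context: A set $X$ of $\{0,1\}$-vectors spans a vector $y$ (binary sense) if $y=\sum_{x\in X}c_xx$ with $c_x\in\{0,1\}$ and ordinary addition. A binary base of $A$ is a set of $\{0,1\}$ column vectors of length $n$ spanning every column of $A$, of minimum cardinality among such spanning sets (this minimum equals the binary rank of $A$). A base is disjoint in rows if no two distinct vectors of the base have a $1$ in the same coordinate. *)

(* Defs.v *)
From mathcomp Require Import all_boot all_order all_algebra.
Set Implicit Arguments. Unset Strict Implicit. Unset Printing Implicit Defensive.

(* A {0,1}-vector of length n: a finite function 'I_n -> bool (true = 1). *)
Definition bvec (n : nat) := {ffun 'I_n -> bool}.

(* X spans y in the binary sense: y = sum_{x in X} c_x x with c_x in {0,1},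
   using ordinary (natural number) addition, coordinatewise. *)
Definition bspans (n : nat) (X : {set bvec n}) (y : 'I_n -> bool) : Prop :=
  exists c : bvec n -> bool,
    forall i : 'I_n, (y i : nat) = (\sum_(x in X) (c x : nat) * (x i : nat))%N.

Definition spans_cols (n m : nat) (A : 'M[bool]_(n, m)) (X : {set bvec n}) : Prop :=
  forall j : 'I_m, bspans X (fun i => A i j).

Definition binary_base (n m : nat) (A : 'M[bool]_(n, m)) (X : {set bvec n}) : Prop :=
  spans_cols A X /\ forall Y : {set bvec n}, spans_cols A Y -> #|X| <= #|Y|.

Definition disjoint_in_rows (n : nat) (X : {set bvec n}) : Prop :=
  forall x y : bvec n, x \in X -> y \in X -> x != y ->
    forall i : 'I_n, ~~ (x i && y i).

(* Main.v *)
Require Import Defs.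
From mathcomp Require Import all_boot all_order all_algebra.
Set Implicit Arguments. Unset Strict Implicit.

Lemma sum_at (n : nat) (X : {set bvec n}) (c : bvec n -> bool) x i :
  disjoint_in_rows X -> x \in X -> x i ->
  (\sum_(v in X) (c v : nat) * (v i : nat) = c x)%N.
Proof.
move=> dX xX xi; rewrite (big_setD1 x xX) /= xi muln1 big1 ?addn0 //.
move=> v /setD1P [vx vX]; have := dX v x vX xX vx i.
by rewrite xi andbT => /negbTE ->; rewrite muln0.
Qed.

Lemma L0 n m (A : 'M[bool]_(n, m)) X x i j (c : bvec n -> bool) :
  disjoint_in_rows X -> x \in X -> x i ->
  (forall k : 'I_n, (A k j : nat) = (\sum_(v in X) (c v : nat) * (v k : nat))%N) ->
  A i j = c x.
Proof.
move=> dX xX xi hc; have := hc i; rewrite (sum_at c dX xX xi).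
by case: (A i j); case: (c x).
Qed.

Lemma L1 n m (A : 'M[bool]_(n, m)) X i j :
  spans_cols A X -> A i j -> exists2 x, x \in X & x i.
Proof.
move=> sX Aij; case: (sX j) => c hc.
case: (boolP [exists x, (x \in X) && x i]) => [/existsP [x /andP [xX xi]]|h].
  by exists x.
have := hc i; rewrite Aij big1 //= => v vX.
have : ~~ ((v \in X) && v i) by move: h; rewrite negb_exists => /forallP.
by rewrite vX /= => /negbTE ->; rewrite muln0.
Qed.

Lemma L2 n m (A : 'M[bool]_(n, m)) X x :
  binary_base A X -> disjoint_in_rows X -> x \in X ->
  exists i j, x i && A i j.
Proof.
move=> [sX minX] dX xX.
case: (boolP [exists i, exists j, x i && A i j]) => [/existsP [i /existsP [j h]]|h].
  by exists i, j.
have nh : forall i j, ~~ (x i && A i j).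
  move=> i j; move: h; rewrite negb_exists => /forallP /(_ i).
  by rewrite negb_exists => /forallP /(_ j).
have : spans_cols A (X :\ x).
  move=> j; case: (sX j) => c hc; exists c => k.
  rewrite hc (big_setD1 x xX) /=.
  case: (boolP (x k)) => xk; last by rewrite muln0.
  rewrite -(L0 dX xX xk hc); have := nh k j; rewrite xk /= => /negbTE ->.
  by [].
move=> /minX; rewrite (cardsD1 x X) xX.
by rewrite add1n ltnn.
Qed.

Lemma L3 n m (A : 'M[bool]_(n, m)) X x x' i i' :
  binary_base A X -> disjoint_in_rows X -> x \in X -> x' \in X -> x i -> x' i' ->
  (forall j, A i j = A i' j) -> x = x'.
Proof.
move=> [sX minX] dX xX x'X xi x'i' pat.
case: (eqVneq x x') => // neq; exfalso.
pose u : bvec n := [ffun k => x k || x' k].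
pose D := X :\ x :\ x'.
have uD : u \notin D.
  apply/negP => /setD1P [ux' /setD1P [ux uX]].
  by have := dX u x uX xX ux i; rewrite /u ffunE xi.
have x'X1 : x' \in X :\ x by rewrite in_setD1 eq_sym neq x'X.
have : spans_cols A (u |: D).
  move=> j; case: (sX j) => c hc.
  exists (fun v => if v == u then c x else c v) => k.
  have cxx : c x = c x'.
    by rewrite -(L0 dX xX xi hc) -(L0 dX x'X x'i' hc) pat.
  rewrite hc big_setU1 //= eqxx.
  rewrite [in RHS](eq_bigr (fun v => (c v : nat) * v k)); last first.
    move=> v vD; case: (eqVneq v u) => [vu|//].
    have : u \in D by rewrite -vu. by rewrite (negbTE uD).
  rewrite (big_setD1 x xX) (big_setD1 x' x'X1) /= addnA; congr (_ + _).
  have := dX x x' xX x'X neq k.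
  rewrite /u ffunE -cxx.
  by case: (c x); case: (x k); case: (x' k).
move=> /minX; rewrite cardsU1 uD (cardsD1 x X) xX (cardsD1 x' (X :\ x)) x'X1.
by rewrite /D /= !add1n ltnn.
Qed.

Lemma pattern n m (A : 'M[bool]_(n, m)) X x i k :
  binary_base A X -> disjoint_in_rows X -> x \in X -> x i -> x k ->
  forall j, A k j = A i j.
Proof.
move=> [sX _] dX xX xi xk j; case: (sX j) => c hc.
by rewrite (L0 dX xX xi hc) (L0 dX xX xk hc).
Qed.

Lemma subl n m (A : 'M[bool]_(n, m)) X Y x y i j k :
  binary_base A X -> disjoint_in_rows X ->
  binary_base A Y -> disjoint_in_rows Y ->
  x \in X -> y \in Y -> x i -> y i -> A i j -> x k -> y k.
Proof.
move=> bX dX bY dY xX yY xi yi Aij xk.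
have pk := pattern bX dX xX xi xk.
have Akj : A k j by rewrite pk.
have [y' y'Y y'k] := L1 bY.1 Akj.
by rewrite -(L3 bY dY y'Y yY y'k yi pk).
Qed.

Lemma subX n m (A : 'M[bool]_(n, m)) X Y :
  binary_base A X -> disjoint_in_rows X ->
  binary_base A Y -> disjoint_in_rows Y -> X \subset Y.
Proof.
move=> bX dX bY dY; apply/subsetP => x xX.
have [i [j /andP [xi Aij]]] := L2 bX dX xX.
have [y yY yi] := L1 bY.1 Aij.
suff -> : x = y by [].
apply/ffunP => k; apply/idP/idP.
  exact: (subl bX dX bY dY xX yY xi yi Aij).
exact: (subl bY dY bX dX yY xX yi xi Aij).
Qed.

Theorem mainTheorem11 (n m : nat) (A : 'M[bool]_(n, m)) (X Y : {set bvec n}) :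
  binary_base A X -> disjoint_in_rows X ->
  binary_base A Y -> disjoint_in_rows Y ->
  X = Y.
Proof.
move=> bX dX bY dY; apply/eqP; rewrite eqEsubset.
by rewrite (subX bX dX bY dY) (subX bY dY bX dX).
Qed.
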